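(* If $x\ge1$ then $\Gamma(x,x)\ge\dfrac{\Gamma(x)}{x^{x}}$, and if $0<x\le1$ then $\Gamma(x,x)\le\dfrac{\Gamma(x)}{x^{x}}$.
   Context: For $x>0,y>0$ the Bigamma function is the (convergent) improper integral $\Gamma(x,y):=\int_0^1(-\ln t)^{x-1}\big(-\ln(1-t)\big)^{y-1}\,dt$. $\Gamma(x)$ (one argument) denotes Euler's gamma function. *)

(* Defs.v *)
From Stdlib Require Import Reals.
From Coquelicot Require Import Coquelicot.
Open Scope R_scope.

Definition EulerGamma (x : R) : R :=
  RInt_gen (fun t => Rpower t (x - 1) * exp (- t))
           (at_right 0) (Rbar_locally p_infty).

Definition Bigamma (x y : R) : R :=
  RInt_gen (fun t => Rpower (- ln t) (x - 1) * Rpower (- ln (1 - t)) (y - 1))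
           (at_right 0) (at_left 1).

(* Main.v *)
Require Import Defs.
From Coquelicot Require Import Coquelicot.
From Stdlib Require Import Reals Lra Classical.
Open Scope R_scope.
From Stdlib Require Import Psatz.

Lemma ball_R (c e y : R) : ball c e y <-> Rabs (y - c) < e.
Proof. unfold ball; simpl; unfold AbsRing_ball, abs, minus, plus, opp; simpl. tauto. Qed.

Lemma exRInt_cont a b (f : R -> R) u v : (forall t, a<t<b -> continuous f t) -> a < u -> u <= v -> v < b ->
  ex_RInt f u v.
Proof. intros Hc Hu Huv Hv. apply (@ex_RInt_continuous R_CompleteNormedModule).
  rewrite Rmin_left by lra; rewrite Rmax_right by lra. intros z Hz; apply Hc; lra. Qed.

Lemma mono_lim a b (f : R -> R) M : a < b -> (forall t, a<t<b -> 0 <= f t) ->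
  (forall t, a<t<b -> continuous f t) ->
  (forall u v, a<u -> u<=v -> v<b -> RInt f u v <= M) ->
  exists l, filterlim (fun p => RInt f (fst p) (snd p)) (filter_prod (at_right a) (at_left b)) (locally l).
Proof.
  intros Hab Hpos Hc HM.
  set (E := fun y => exists u v, a<u /\ u<=v /\ v<b /\ y = RInt f u v).
  destruct (completeness E) as [l [Hub Hlub]].
  { exists M. intros y (u&v&H1&H2&H3&->). apply HM; lra. }
  { exists (RInt f ((a+b)/2) ((a+b)/2)). exists ((a+b)/2), ((a+b)/2). repeat split; lra. }
  exists l. intros P [eps Heps].
  destruct (classic (exists y, E y /\ l - eps < y)) as [[y0 [[u0 [v0 (H1&H2&H3&->)]] Hy0]]|Hn].
  2:{ exfalso. assert (l <= l - eps). { apply Hlub. intros y Ey.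
        destruct (Rle_or_lt y (l - eps)); auto. exfalso; apply Hn; eauto. }
      destruct eps; simpl in *; lra. }
  apply Filter_prod with (Q := fun y => a < y <= u0) (R := fun y => v0 <= y < b).
  - exists (mkposreal (u0 - a) ltac:(lra)). intros y Hy Hay. apply ball_R in Hy. simpl in Hy.
    apply Rabs_lt_between in Hy. unfold minus, plus, opp in Hy; simpl in Hy. lra.
  - exists (mkposreal (b - v0) ltac:(lra)). intros y Hy Hay. apply ball_R in Hy. simpl in Hy.
    apply Rabs_lt_between in Hy. unfold minus, plus, opp in Hy; simpl in Hy. lra.
  - intros a' b' Ha' Hb'. simpl. apply Heps. apply ball_R.
    assert (Hle : RInt f a' b' <= l). { apply Hub. exists a', b'. repeat split; lra. }
    assert (Hge : RInt f u0 v0 <= RInt f a' b').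
    { assert (e1 : ex_RInt f a' u0) by (apply (exRInt_cont a b); auto; lra).
      assert (e2 : ex_RInt f u0 v0) by (apply (exRInt_cont a b); auto; lra).
      assert (e3 : ex_RInt f v0 b') by (apply (exRInt_cont a b); auto; lra).
      assert (e4 : ex_RInt f u0 b') by (apply (exRInt_cont a b); auto; lra).
      rewrite <- (RInt_Chasles f a' u0 b') by auto.
      rewrite <- (RInt_Chasles f u0 v0 b') by auto.
      unfold plus; simpl.
      assert (0 <= RInt f a' u0) by (apply RInt_ge_0; [lra | exact e1 | intros; apply Hpos; lra]).
      assert (0 <= RInt f v0 b') by (apply RInt_ge_0; [lra | exact e3 | intros; apply Hpos; lra]).
      lra. }
    apply Rabs_lt_between. lra.
Qed.

Lemma exp_le' a b : a <= b -> exp a <= exp b.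
Proof. intros [H|H]; [left; apply exp_increasing; auto | rewrite H; right; auto]. Qed.

Lemma ln_le_sub1 y : 0 < y -> ln y <= y - 1.
Proof. intros Hy. pose proof (exp_ineq1_le (ln y)). rewrite exp_ln in H; lra. Qed.

Lemma ln_lt0 t : 0 < t < 1 -> ln t < 0.
Proof. intros. rewrite <- ln_1. apply ln_increasing; lra. Qed.

Lemma P1 t : 0 < t < 1 -> t <= - ln (1 - t).
Proof. intros Ht. pose proof (ln_le_sub1 (1 - t)). lra. Qed.

Lemma P2 t : 0 < t < 1 -> 1 - t <= - ln t.
Proof. intros Ht. pose proof (ln_le_sub1 t). lra. Qed.

Lemma Rpower_pos a p : 0 < Rpower a p.
Proof. unfold Rpower; apply exp_pos. Qed.

Lemma Rpower_base_le a b p : 0 < a -> a <= b -> 0 <= p -> Rpower a p <= Rpower b p.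
Proof. intros. unfold Rpower. apply exp_le'. apply Rmult_le_compat_l; auto. apply ln_le; auto. Qed.

Lemma Rpower_base_ge a b p : 0 < a -> a <= b -> p <= 0 -> Rpower b p <= Rpower a p.
Proof. intros. unfold Rpower. apply exp_le'.
  assert (ln a <= ln b) by (apply ln_le; auto). nra. Qed.

Lemma Rpower_1l p : Rpower 1 p = 1.
Proof. unfold Rpower. rewrite ln_1, Rmult_0_r. apply exp_0. Qed.

Lemma neg_ln_le y : 0 < y -> - ln y <= / y - 1.
Proof. intros Hy. rewrite <- ln_Rinv by auto. apply ln_le_sub1. apply Rinv_0_lt_compat; auto. Qed.

Lemma prod_le1_half t : 0 < t <= / 2 -> (- ln t) * (- ln (1 - t)) <= 1.
Proof.
  intros Ht. set (s := sqrt t).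
  assert (Hs : 0 < s) by (apply sqrt_lt_R0; lra).
  assert (Hss : s * s = t) by (apply sqrt_sqrt; lra).
  assert (E1 : - ln t = 2 * (- ln s)).
  { rewrite <- Hss, ln_mult by auto. ring. }
  assert (E2 : - ln s <= / s - 1) by (apply neg_ln_le; auto).
  assert (E3 : - ln (1 - t) <= / (1 - t) - 1) by (apply neg_ln_le; lra).
  assert (E4 : 0 <= - ln t) by (pose proof (ln_lt0 t); lra).
  assert (E5 : 0 <= - ln (1 - t)) by (pose proof (ln_lt0 (1-t)); lra).
  assert (E6 : / (1 - t) - 1 <= 2 * t).
  { assert (Hw : / (1 - t) * (1 - t) = 1) by (field; lra).
    assert (Hw0 : 0 < / (1 - t)) by (apply Rinv_0_lt_compat; lra).
    nra. }
  apply Rle_trans with ((2 * (/ s - 1)) * (2 * t)).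
  { apply Rmult_le_compat; lra. }
  clearbody s.
  assert (Hfin: 2*(/s-1)*(2*t) = 4*(s - s*s)) by (rewrite <- Hss; field; lra).
  rewrite Hfin. pose proof (Rle_0_sqr (2*s-1)). unfold Rsqr in *. lra.
Qed.

Lemma prod_le1 t : 0 < t < 1 -> (- ln t) * (- ln (1 - t)) <= 1.
Proof.
  intros Ht. destruct (Rle_or_lt t (/2)).
  - apply prod_le1_half; lra.
  - rewrite Rmult_comm. replace t with (1 - (1 - t)) at 2 by ring. apply prod_le1_half; lra.
Qed.
Definition gB (x : R) := fun t => Rpower (- ln t) (x - 1) * Rpower (- ln (1 - t)) (x - 1).
Definition gG (x : R) := fun t => Rpower (- ln t) (x - 1) * Rpower t (x - 1).
Definition hG (x : R) := fun t => 2 * (Rpower t (x - 1) + Rpower (1 - t) (x - 1)).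
Definition GE (x : R) := fun t => Rpower t (x - 1) * exp (- t).

Ltac contd := apply (@ex_derive_continuous R_AbsRing R_NormedModule).

Lemma cont_gB x t : 0 < t < 1 -> continuous (gB x) t.
Proof. intros Ht. contd. unfold gB, Rpower.
  assert (ln t < 0) by (apply ln_lt0; lra).
  assert (ln (1-t) < 0) by (apply ln_lt0; lra).
  auto_derive. replace (1 + - t) with (1 - t) by ring. repeat split; lra.
Qed.

Lemma cont_gG x t : 0 < t < 1 -> continuous (gG x) t.
Proof. intros Ht. contd. unfold gG, Rpower.
  assert (ln t < 0) by (apply ln_lt0; lra).
  auto_derive. repeat split; lra.
Qed.

Lemma cont_hG x t : 0 < t < 1 -> continuous (hG x) t.
Proof. intros Ht. contd. unfold hG, Rpower.
  auto_derive. repeat split; lra.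
Qed.

Lemma cont_GE x t : 0 < t -> continuous (GE x) t.
Proof. intros Ht. contd. unfold GE, Rpower.
  auto_derive. repeat split; lra.
Qed.

Lemma gB_pos x t : 0 <= gB x t.
Proof. unfold gB. pose proof (Rpower_pos (- ln t) (x-1)). pose proof (Rpower_pos (- ln (1-t)) (x-1)). nra. Qed.
Lemma gG_pos x t : 0 <= gG x t.
Proof. unfold gG. pose proof (Rpower_pos (- ln t) (x-1)). pose proof (Rpower_pos t (x-1)). nra. Qed.

Lemma case1_le x t : 1 <= x -> 0 < t < 1 -> gG x t <= gB x t.
Proof. intros Hx Ht. unfold gG, gB. apply Rmult_le_compat_l. left; apply Rpower_pos.
  apply Rpower_base_le; try lra. apply P1; lra. Qed.

Lemma case1_bd x t : 1 <= x -> 0 < t < 1 -> gB x t <= 1.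
Proof. intros Hx Ht. unfold gB.
  assert (ln t < 0) by (apply ln_lt0; lra).
  assert (ln (1-t) < 0) by (apply ln_lt0; lra).
  rewrite Rpower_mult_distr by lra. apply Rle_trans with (Rpower 1 (x-1)); [| rewrite Rpower_1l; lra].
  apply Rpower_base_le; try lra. nra. apply prod_le1; lra. Qed.

Lemma case2_le x t : x <= 1 -> 0 < t < 1 -> gB x t <= gG x t.
Proof. intros Hx Ht. unfold gG, gB. apply Rmult_le_compat_l. left; apply Rpower_pos.
  apply Rpower_base_ge; try lra. apply P1; lra. Qed.

Lemma Rpower_half_le2 x : 0 < x <= 1 -> Rpower (/2) (x - 1) <= 2.
Proof. intros Hx. unfold Rpower. rewrite ln_Rinv by lra.
  rewrite <- (exp_ln 2) at 2 by lra. apply exp_le'.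
  pose proof ln_lt_2. nra. Qed.

Lemma case2_bd x t : 0 < x <= 1 -> 0 < t < 1 -> gG x t <= hG x t.
Proof. intros Hx Ht. unfold gG, hG.
  assert (ln t < 0) by (apply ln_lt0; lra).
  assert (A1 : Rpower (- ln t) (x - 1) <= Rpower (1 - t) (x - 1)).
  { apply Rpower_base_ge; try lra. apply P2; lra. }
  pose proof (Rpower_pos t (x-1)). pose proof (Rpower_pos (1-t) (x-1)).
  pose proof (Rpower_half_le2 x Hx).
  apply Rle_trans with (Rpower (1 - t) (x - 1) * Rpower t (x - 1)).
  { apply Rmult_le_compat_r; lra. }
  destruct (Rle_or_lt t (/2)).
  - assert (Rpower (1 - t) (x - 1) <= Rpower (/2) (x - 1)) by (apply Rpower_base_ge; lra).
    nra.
  - assert (Rpower t (x - 1) <= Rpower (/2) (x - 1)) by (apply Rpower_base_ge; lra).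
    nra.
Qed.

Lemma hG_int x u v : 0 < x -> 0 < u -> u <= v -> v < 1 -> RInt (hG x) u v <= 4 / x.
Proof.
  intros Hx Hu Huv Hv.
  set (H := fun s => 2 / x * (Rpower s x - Rpower (1 - s) x)).
  assert (HI : is_RInt (hG x) u v (minus (H v) (H u))).
  { apply (@is_RInt_derive R_CompleteNormedModule).
    - intros s Hs. rewrite Rmin_left in Hs by lra. rewrite Rmax_right in Hs by lra.
      unfold H, hG, Rpower. auto_derive. repeat split; lra.
      replace (1 + - s) with (1 - s) by ring.
      replace (x - 1) with (x + -1) by ring.
      replace ((x + -1) * ln s) with (x * ln s + - ln s) by ring.
      replace ((x + -1) * ln (1-s)) with (x * ln (1-s) + - ln (1-s)) by ring.
      rewrite !exp_plus, !exp_Ropp, !exp_ln by lra. field. repeat split; lra.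
    - intros s Hs. rewrite Rmin_left in Hs by lra. rewrite Rmax_right in Hs by lra.
      apply cont_hG; lra. }
  rewrite (is_RInt_unique _ _ _ _ HI). unfold minus, plus, opp; simpl. unfold H.
  assert (forall s, 0 < s <= 1 -> Rpower s x <= 1).
  { intros s Hs. rewrite <- (Rpower_1l x). apply Rpower_base_le; lra. }
  pose proof (Rpower_pos v x). pose proof (Rpower_pos (1-v) x).
  pose proof (Rpower_pos u x). pose proof (Rpower_pos (1-u) x).
  pose proof (H0 v ltac:(lra)). pose proof (H0 (1-u) ltac:(lra)).
  assert (0 < 2 / x) by (apply Rdiv_lt_0_compat; lra).
  apply Rle_trans with (2 / x * 2). nra. right; field; lra.
Qed.

Lemma to_gen a b (f : R -> R) l : a < b -> (forall t, a<t<b -> continuous f t) ->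
  filterlim (fun p => RInt f (fst p) (snd p)) (filter_prod (at_right a) (at_left b)) (locally l) ->
  is_RInt_gen f (at_right a) (at_left b) l.
Proof.
  intros Hab Hc Hl. apply filterlimi_lim_ext_loc with (f := fun p => RInt f (fst p) (snd p)); auto.
  apply Filter_prod with (Q := fun y => a < y < (a+b)/2) (R := fun y => (a+b)/2 < y < b).
  - exists (mkposreal ((b-a)/2) ltac:(lra)). intros y Hy Hay. apply ball_R in Hy. simpl in Hy.
    apply Rabs_lt_between in Hy. unfold minus, plus, opp in Hy; simpl in Hy. lra.
  - exists (mkposreal ((b-a)/2) ltac:(lra)). intros y Hy Hay. apply ball_R in Hy. simpl in Hy.
    apply Rabs_lt_between in Hy. unfold minus, plus, opp in Hy; simpl in Hy. lra.
  - intros u v Hu Hv. simpl. apply (@RInt_correct R_CompleteNormedModule).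
    apply (exRInt_cont a b); auto; lra.
Qed.

Lemma int_le_of (f g : R -> R) u v : 0 < u -> u <= v -> v < 1 ->
  (forall t, 0<t<1 -> continuous f t) -> (forall t, 0<t<1 -> continuous g t) ->
  (forall t, 0<t<1 -> f t <= g t) -> RInt f u v <= RInt g u v.
Proof. intros. apply RInt_le; auto; try (apply (exRInt_cont 0 1); auto; lra).
  intros; apply H4; lra. Qed.

Lemma int_le_1 (f : R -> R) u v : 0 < u -> u <= v -> v < 1 ->
  (forall t, 0<t<1 -> continuous f t) -> (forall t, 0<t<1 -> f t <= 1) -> RInt f u v <= 1.
Proof. intros. apply Rle_trans with (RInt (fun _ => 1) u v).
  apply int_le_of; auto. intros; apply continuous_const.
  rewrite RInt_const. unfold scal; simpl; unfold mult; simpl. lra. Qed.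

Lemma pt_identity x y : 0 < x -> 0 < y < 1 ->
  scal (- x / y) (GE x (- x * ln y)) = scal (- Rpower x x) (gG x y).
Proof.
  intros Hx Hy. unfold scal; simpl; unfold mult; simpl. unfold GE, gG, Rpower.
  assert (Hl : ln y < 0) by (apply ln_lt0; lra).
  replace (- x * ln y) with (x * - ln y) by ring.
  rewrite ln_mult by lra.
  assert (H : - x / y = - exp (ln x + - ln y)).
  { rewrite exp_plus, exp_Ropp, !exp_ln by lra. field. lra. }
  rewrite H. rewrite <- !Ropp_mult_distr_l. rewrite <- !exp_plus. f_equal. f_equal. ring.
Qed.

Lemma subst x u v : 0 < x -> 0 < u < 1 -> 0 < v < 1 ->
  RInt (GE x) (- x * ln u) (- x * ln v) = - Rpower x x * RInt (gG x) u v.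
Proof.
  intros Hx Hu Hv.
  assert (Hm : forall y, Rmin u v <= y <= Rmax u v -> 0 < y < 1).
  { intros y Hy. destruct (Rle_or_lt u v).
    - rewrite Rmin_left, Rmax_right in Hy by lra. lra.
    - rewrite Rmin_right, Rmax_left in Hy by lra. lra. }
  pose proof (is_RInt_comp (V := R_CompleteNormedModule) (GE x) (fun s => - x * ln s) (fun s => - x / s) u v) as HC.
  assert (C1 : forall y, Rmin u v <= y <= Rmax u v -> continuous (GE x) ((fun s => - x * ln s) y)).
  { intros y Hy. pose proof (Hm y Hy). apply cont_GE.
    assert (ln y < 0) by (apply ln_lt0; lra). simpl. nra. }
  assert (C2 : forall y, Rmin u v <= y <= Rmax u v ->
     is_derive (fun s => - x * ln s) y ((fun s => - x / s) y) /\ continuous (fun s => - x / s) y).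
  { intros y Hy. pose proof (Hm y Hy). split.
    + auto_derive. lra. field. lra.
    + contd. auto_derive. lra. }
  rewrite <- (is_RInt_unique _ _ _ _ (HC C1 C2)).
  rewrite (RInt_ext _ (fun y => scal (- Rpower x x) (gG x y))).
  + assert (Hex : ex_RInt (gG x) u v).
    { apply (ex_RInt_continuous (V:=R_CompleteNormedModule)). intros z Hz. apply cont_gG. apply Hm; auto. }
    exact (RInt_scal (V:=R_CompleteNormedModule) (gG x) u v (- Rpower x x) Hex).
  + intros y Hy. apply pt_identity; auto. apply Hm; lra.
Qed.

Definition psi (x t : R) := exp (- t / x).

Lemma psi_in x t : 0 < x -> 0 < t -> 0 < psi x t < 1.
Proof. intros Hx Ht. unfold psi. split. apply exp_pos. rewrite <- exp_0. apply exp_increasing.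
  unfold Rdiv. assert (0 < / x) by (apply Rinv_0_lt_compat; lra). nra. Qed.

Lemma phi_psi x t : 0 < x -> - x * ln (psi x t) = t.
Proof. intros Hx. unfold psi. rewrite ln_exp. field. lra. Qed.

Lemma GE_eq x a b : 0 < x -> 0 < a -> 0 < b ->
  RInt (GE x) a b = Rpower x x * RInt (gG x) (psi x b) (psi x a).
Proof.
  intros Hx Ha Hb.
  pose proof (subst x (psi x b) (psi x a) Hx (psi_in x b Hx Hb) (psi_in x a Hx Ha)) as S.
  rewrite !phi_psi in S by lra.
  assert (Hex : ex_RInt (GE x) a b).
  { apply (ex_RInt_continuous (V:=R_CompleteNormedModule)). intros z Hz. apply cont_GE.
    destruct (Rle_or_lt a b).
    - rewrite Rmin_left in Hz by lra. lra.
    - rewrite Rmin_right in Hz by lra. lra. }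
  rewrite <- (opp_RInt_swap (V:=R_CompleteNormedModule) _ _ _ Hex) in S.
  unfold opp in S; simpl in S. lra.
Qed.

Lemma psi_lim1 x : 0 < x -> filterlim (psi x) (Rbar_locally p_infty) (at_right 0).
Proof.
  intros Hx P [eps Heps]. simpl. exists (- x * ln eps). intros t Ht. apply Heps.
  - apply ball_R. rewrite Rminus_0_r. pose proof (exp_pos (- t / x)). unfold psi.
    rewrite Rabs_pos_eq by lra. rewrite <- (exp_ln eps) by (destruct eps; simpl; lra).
    apply exp_increasing. apply (Rmult_lt_reg_r x); [lra|].
    replace (- t / x * x) with (- t) by (field; lra). lra.
  - unfold psi. apply exp_pos.
Qed.

Lemma psi_lim2 x : 0 < x -> filterlim (psi x) (at_right 0) (at_left 1).
Proof.
  intros Hx P [eps Heps]. simpl.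
  assert (Hxe : 0 < x * eps) by (destruct eps; simpl; nra).
  exists (mkposreal (x * eps) Hxe). intros t Ht Ht0. change R in t. simpl in Ht.
  pose proof (proj1 (ball_R _ _ _) Ht) as Ht'. clear Ht. rename Ht' into Ht.
  rewrite Rminus_0_r, Rabs_pos_eq in Ht by lra.
  pose proof (psi_in x t Hx Ht0). apply Heps; [|lra].
  apply ball_R. rewrite Rabs_left1 by lra.
  pose proof (exp_ineq1_le (- t / x)). unfold psi in *.
  assert (t / x < eps).
  { apply (Rmult_lt_reg_r x); [lra|]. replace (t / x * x) with t by (field; lra). lra. }
  replace (- t / x) with (- (t / x)) in H0 by (field; lra).
  replace (- t / x) with (- (t / x)) by (field; lra). lra.
Qed.

Lemma G_lim x l : 0 < x ->
  filterlim (fun p => RInt (gG x) (fst p) (snd p)) (filter_prod (at_right 0) (at_left 1)) (locally l) ->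
  is_RInt_gen (GE x) (at_right 0) (Rbar_locally p_infty) (Rpower x x * l).
Proof.
  intros Hx Hl.
  assert (Ev : filter_prod (at_right 0) (Rbar_locally p_infty) (fun ab => 0 < fst ab /\ 0 < snd ab)).
  { apply Filter_prod with (Q := fun y => 0 < y) (R := fun y => 0 < y).
    - exists (mkposreal 1 Rlt_0_1). auto.
    - exists 0. auto.
    - simpl; auto. }
  apply filterlimi_lim_ext_loc with (f := fun p => RInt (GE x) (fst p) (snd p)).
  - eapply filter_imp; [|exact Ev]. intros [a b] [Ha Hb]. simpl in *.
    apply (@RInt_correct R_CompleteNormedModule).
    apply (ex_RInt_continuous (V:=R_CompleteNormedModule)). intros z Hz. apply cont_GE.
    destruct (Rle_or_lt a b).
    + rewrite Rmin_left in Hz by lra. lra.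
    + rewrite Rmin_right in Hz by lra. lra.
  - apply filterlim_ext_loc with
      (f := fun ab => Rpower x x * RInt (gG x) (psi x (snd ab)) (psi x (fst ab))).
    { eapply filter_imp; [|exact Ev]. intros [a b] [Ha Hb]. simpl in *. symmetry. apply GE_eq; auto. }
    apply filterlim_comp with (G := locally l)
      (f := fun ab => RInt (gG x) (psi x (snd ab)) (psi x (fst ab))) (g := fun z => Rpower x x * z).
    + apply filterlim_comp with (G := filter_prod (at_right 0) (at_left 1))
        (f := fun ab => (psi x (snd ab), psi x (fst ab))) (g := fun p => RInt (gG x) (fst p) (snd p)); auto.
      apply filterlim_pair.
      * apply filterlim_comp with (G := Rbar_locally p_infty). apply filterlim_snd. apply psi_lim1; auto.
      * apply filterlim_comp with (G := at_right 0). apply filterlim_fst. apply psi_lim2; auto.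
    + exact (filterlim_scal_r (K:=R_AbsRing) (V:=R_NormedModule) (Rpower x x) l).
Qed.

Lemma lim_le (f g : R -> R) lf lg :
  (forall t, 0 < t < 1 -> 0 <= f t <= g t) ->
  is_RInt_gen f (at_right 0) (at_left 1) lf -> is_RInt_gen g (at_right 0) (at_left 1) lg -> lf <= lg.
Proof.
  intros Hfg Hf Hg.
  apply Rle_trans with (norm lf). unfold norm; simpl. apply Rle_abs.
  apply (RInt_gen_norm (V:=R_CompleteNormedModule) (Fa := at_right 0) (Fb := at_left 1) f g lf lg); auto.
  - apply Filter_prod with (Q := fun y => 0 < y < /2) (R := fun y => /2 < y < 1).
    + exists (mkposreal (/2) ltac:(lra)). intros y Hy Hay. apply ball_R in Hy. simpl in Hy.
      apply Rabs_lt_between in Hy. unfold minus, plus, opp in Hy; simpl in Hy. lra.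
    + exists (mkposreal (/2) ltac:(lra)). intros y Hy Hay. apply ball_R in Hy. simpl in Hy.
      apply Rabs_lt_between in Hy. unfold minus, plus, opp in Hy; simpl in Hy. lra.
    + intros; simpl; lra.
  - apply Filter_prod with (Q := fun y => 0 < y < /2) (R := fun y => /2 < y < 1).
    + exists (mkposreal (/2) ltac:(lra)). intros y Hy Hay. apply ball_R in Hy. simpl in Hy.
      apply Rabs_lt_between in Hy. unfold minus, plus, opp in Hy; simpl in Hy. lra.
    + exists (mkposreal (/2) ltac:(lra)). intros y Hy Hay. apply ball_R in Hy. simpl in Hy.
      apply Rabs_lt_between in Hy. unfold minus, plus, opp in Hy; simpl in Hy. lra.
    + intros a b Ha Hb t Ht; simpl in *. unfold norm; simpl.
      destruct (Hfg t ltac:(lra)). rewrite Rabs_pos_eq; lra.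
Qed.

Lemma div_cancel (a b : R) : 0 < a -> a * b / a = b.
Proof. intros. field. lra. Qed.

Theorem mainTheorem7 :
  (forall x : R, 1 <= x -> Bigamma x x >= EulerGamma x / Rpower x x) /\
  (forall x : R, 0 < x -> x <= 1 -> Bigamma x x <= EulerGamma x / Rpower x x).
Proof.
  split.
  - intros x Hx. assert (Hx0 : 0 < x) by lra.
    destruct (mono_lim 0 1 (gG x) 1 Rlt_0_1) as [l Hl].
    + intros; apply gG_pos.
    + intros; apply cont_gG; auto.
    + intros u v Hu Huv Hv. apply int_le_1; auto. intros; apply cont_gG; auto.
      intros t Ht. apply Rle_trans with (gB x t). apply case1_le; auto. apply case1_bd; auto.
    + destruct (mono_lim 0 1 (gB x) 1 Rlt_0_1) as [lB HlB].
      * intros; apply gB_pos.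
      * intros; apply cont_gB; auto.
      * intros u v Hu Huv Hv. apply int_le_1; auto. intros; apply cont_gB; auto.
        intros t Ht. apply case1_bd; auto.
      * pose proof (G_lim x l Hx0 Hl) as HG.
        assert (E1 : EulerGamma x = Rpower x x * l) by (unfold EulerGamma; apply is_RInt_gen_unique; exact HG).
        pose proof (to_gen 0 1 (gB x) lB Rlt_0_1 (fun t Ht => cont_gB x t Ht) HlB) as HB.
        assert (E2 : Bigamma x x = lB) by (unfold Bigamma; apply is_RInt_gen_unique; exact HB).
        pose proof (to_gen 0 1 (gG x) l Rlt_0_1 (fun t Ht => cont_gG x t Ht) Hl) as Hg.
        assert (l <= lB).
        { apply (lim_le (gG x) (gB x)); auto. intros; split; [apply gG_pos | apply case1_le; auto]. }
        rewrite E1, E2. pose proof (Rpower_pos x x). apply Rle_ge.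
        rewrite div_cancel by lra. auto.
  - intros x Hx0 Hx.
    destruct (mono_lim 0 1 (gG x) (4 / x) Rlt_0_1) as [l Hl].
    + intros; apply gG_pos.
    + intros; apply cont_gG; auto.
    + intros u v Hu Huv Hv. apply Rle_trans with (RInt (hG x) u v).
      apply int_le_of; auto. intros; apply cont_gG; auto. intros; apply cont_hG; auto.
      intros; apply case2_bd; auto. apply hG_int; auto.
    + destruct (mono_lim 0 1 (gB x) (4 / x) Rlt_0_1) as [lB HlB].
      * intros; apply gB_pos.
      * intros; apply cont_gB; auto.
      * intros u v Hu Huv Hv. apply Rle_trans with (RInt (gG x) u v).
        apply int_le_of; auto. intros; apply cont_gB; auto. intros; apply cont_gG; auto.
        intros; apply case2_le; auto.
        apply Rle_trans with (RInt (hG x) u v).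
        apply int_le_of; auto. intros; apply cont_gG; auto. intros; apply cont_hG; auto.
        intros; apply case2_bd; auto. apply hG_int; auto.
      * pose proof (G_lim x l Hx0 Hl) as HG.
        assert (E1 : EulerGamma x = Rpower x x * l) by (unfold EulerGamma; apply is_RInt_gen_unique; exact HG).
        pose proof (to_gen 0 1 (gB x) lB Rlt_0_1 (fun t Ht => cont_gB x t Ht) HlB) as HB.
        assert (E2 : Bigamma x x = lB) by (unfold Bigamma; apply is_RInt_gen_unique; exact HB).
        pose proof (to_gen 0 1 (gG x) l Rlt_0_1 (fun t Ht => cont_gG x t Ht) Hl) as Hg.
        assert (lB <= l).
        { apply (lim_le (gB x) (gG x)); auto. intros; split; [apply gB_pos | apply case2_le; auto]. }
        rewrite E1, E2. pose proof (Rpower_pos x x).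
        rewrite div_cancel by lra. auto.
Qed.
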